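(* Let $X$ be a topological space, $(Z,d)$ a bounded metric space, $F:X\to 2^Z$ a lower quasicontinuous set-valued mapping, and $z_0\in Z$. Then the mapping $\phi:X\to\mathbb R$, $\phi(x)=\sup\{d(z_0,z):z\in F(x)\}$, is cliquish.
   Context: $2^Z$ is the set of nonempty subsets of $Z$. $F:X\to 2^Z$ is lower quasicontinuous if for each $x_0\in X$, each neighborhood $U$ of $x_0$ and each open $W\subset Z$ with $F(x_0)\cap W\ne\emptyset$, there is an open $O$ with $\emptyset\ne O\subset U$ and $F(x)\cap W\ne\emptyset$ for all $x\in O$. A mapping $g$ from $X$ into a metric space is cliquish at $a$ if for each $\varepsilon>0$ and each neighborhood $U$ of $a$ there is an open $O$ with $\emptyset\ne O\subset U$ and $\mathrm{diam}(g(O))\le\varepsilon$; cliquish means cliquish at every point. $\mathrm{diam}(W)=\sup\{d(u,v):u,v\in W\}$. *)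

(* Defs.v *)
From Stdlib Require Export Reals Classical.
Open Scope R_scope.

Record TopSpace := {
  tcarrier :> Type;
  topen : (tcarrier -> Prop) -> Prop;
  topen_full : topen (fun _ => True);
  topen_empty : topen (fun _ => False);
  topen_inter : forall A B, topen A -> topen B -> topen (fun x => A x /\ B x);
  topen_union : forall (I : Type) (A : I -> tcarrier -> Prop),
      (forall i, topen (A i)) -> topen (fun x => exists i, A i x)
}.

Definition nbhd (X : TopSpace) (x0 : X) (U : X -> Prop) : Prop :=
  exists V, topen X V /\ V x0 /\ (forall x, V x -> U x).

Record MetricSpace := {
  mcarrier :> Type;
  dist : mcarrier -> mcarrier -> R;
  dist_nonneg : forall u v, 0 <= dist u v;
  dist_eq0 : forall u v, dist u v = 0 <-> u = v;
  dist_sym : forall u v, dist u v = dist v u;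
  dist_tri : forall u v w, dist u w <= dist u v + dist v w
}.

Definition bounded_metric (Z : MetricSpace) : Prop :=
  exists M : R, forall u v : Z, dist Z u v <= M.

Definition mopen (Z : MetricSpace) (W : Z -> Prop) : Prop :=
  forall w, W w -> exists r, 0 < r /\ forall z, dist Z w z < r -> W z.

Definition nonempty_valued (X : TopSpace) (Z : MetricSpace) (F : X -> Z -> Prop) : Prop :=
  forall x, exists z, F x z.

Definition lower_quasicontinuous (X : TopSpace) (Z : MetricSpace)
    (F : X -> Z -> Prop) : Prop :=
  forall (x0 : X) (U : X -> Prop) (W : Z -> Prop),
    nbhd X x0 U -> mopen Z W -> (exists z, F x0 z /\ W z) ->
    exists O : X -> Prop, topen X O /\ (exists x, O x) /\ (forall x, O x -> U x) /\
      (forall x, O x -> exists z, F x z /\ W z).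

Definition diam_le (X : TopSpace) (g : X -> R) (O : X -> Prop) (eps : R) : Prop :=
  forall x y, O x -> O y -> Rabs (g x - g y) <= eps.

Definition cliquish_at (X : TopSpace) (g : X -> R) (a : X) : Prop :=
  forall (eps : R) (U : X -> Prop), 0 < eps -> nbhd X a U ->
    exists O : X -> Prop, topen X O /\ (exists x, O x) /\ (forall x, O x -> U x) /\
      diam_le X g O eps.

Definition cliquish (X : TopSpace) (g : X -> R) : Prop :=
  forall a, cliquish_at X g a.

(* Main.v *)
Require Import Defs.
From Stdlib Require Import Lra.

Lemma lub_approx (E : R -> Prop) (s eps : R) :
  is_lub E s -> 0 < eps -> exists r, E r /\ s - eps < r.
Proof.
  intros [Hub Hl] He.
  destruct (classic (exists r, E r /\ s - eps < r)) as [H|H]; auto.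
  exfalso.
  assert (s <= s - eps); [|lra].
  apply Hl. intros r Hr. destruct (Rle_dec r (s - eps)) as [|n]; auto.
  exfalso; apply H; exists r; split; auto; lra.
Qed.

Theorem lemma3p1 (X : TopSpace) (Z : MetricSpace) (F : X -> Z -> Prop)
  (z0 : Z) (phi : X -> R)
  (HZb : bounded_metric Z)
  (HFne : nonempty_valued X Z F)
  (HF : lower_quasicontinuous X Z F)
  (Hphi : forall x, is_lub (fun r => exists z, F x z /\ r = dist Z z0 z) (phi x)) :
  cliquish X phi.
Proof.
  intros a eps U Heps [V [HVo [HVa HVU]]].
  destruct HZb as [M HM].
  set (E := fun r => exists x, V x /\ r = phi x).
  assert (HE : exists s, is_lub E s).
  { destruct (completeness E) as [s0 Hs0]; [| |exists s0; exact Hs0].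
    - exists M. intros r [x [_ ->]]. apply (proj2 (Hphi x)).
      intros r [z [_ ->]]. apply HM.
    - exists (phi a). exists a. auto. }
  destruct HE as [s Hs].
  destruct (lub_approx E s eps Hs Heps) as [r [[x1 [Hx1 ->]] Hr]].
  destruct (lub_approx _ (phi x1) (phi x1 - (s - eps)) (Hphi x1)) as [q [[z [Fz ->]] Hq]];
    [lra|].
  set (W := fun w => s - eps < dist Z z0 w).
  assert (HW : mopen Z W).
  { intros w Hw. exists (dist Z z0 w - (s - eps)). split. unfold W in Hw; lra.
    intros z' Hz'. unfold W. pose proof (dist_tri Z z0 z' w).
    rewrite (dist_sym Z z' w) in H. lra. }
  destruct (HF x1 V W) as [O [HOo [HOne [HOV HOW]]]].
  - exists V; auto.
  - exact HW.
  - exists z; split; auto. unfold W; lra.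
  - exists O. split; [exact HOo|]. split; [exact HOne|]. split.
    + intros x Hx; auto.
    + assert (Hb : forall x, O x -> s - eps < phi x /\ phi x <= s).
      { intros x Hx. split.
        - destruct (HOW x Hx) as [w [Fw Ww]]. unfold W in Ww.
          assert (dist Z z0 w <= phi x) by (apply (proj1 (Hphi x)); exists w; auto).
          lra.
        - apply (proj1 Hs). exists x; auto. }
      intros x y Hx Hy. destruct (Hb x Hx), (Hb y Hy).
      apply Rabs_le; lra.
Qed.
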